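(* For $1\le j\le d-1$ and $\mathbf r=(r_1,\dots,r_d)\in[1,n]^d$, the right convolution action of $\mathcal H_{\mathscr Y}$ on $\mathcal V$ satisfies $$\{e_{r_1\cdots r_d}\}T_j=\begin{cases}\{e_{r_1\cdots r_{j-1}r_{j+1}r_j\cdots r_d}\}, & r_j<r_{j+1},\\ vt\,\{e_{r_1\cdots r_d}\}, & r_j=r_{j+1},\\ (vt-v^{-1}t)\{e_{r_1\cdots r_d}\}+t^2\{e_{r_1\cdots r_{j-1}r_{j+1}r_j\cdots r_d}\}, & r_j>r_{j+1}.\end{cases}$$
   Context: Fix positive integers $n,d$; $q$ a power of an odd prime; $\mathscr X$ the set of flags $0=V_0\subseteq\cdots\subseteq V_n=\mathbb F_q^d$; $\mathscr Y$ the set of complete flags $0=F_0\subset\cdots\subset F_d=\mathbb F_q^d$; $G=\mathrm{GL}_d(\mathbb F_q)$. $G$-orbits on $\mathscr X\times\mathscr Y$ are indexed by the set $\Pi$ of $n\times d$ matrices over $\mathbb N$ with all column sums $1$ (entry $(i,j)$ of the matrix of $(V,F)$ is $\dim\frac{V_{i-1}+V_i\cap F_j}{V_{i-1}+V_i\cap F_{j-1}}$); $B\in\Pi$ corresponds to $\mathbf r$ with $b_{r_c,c}=1$, and $e_{\mathbf r}$ is the characteristic function of that orbit. $\mathcal A=\mathbb Z[v^{\pm1},t^{\pm1}]$; $\mathcal V$ is the free $\mathcal A$-module spanned by the $e_{\mathbf r}$; $\mathcal H_{\mathscr Y}$ is the $\mathcal A$-algebra of $G$-invariant functions on $\mathscr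 Y\times\mathscr Y$, acting on the right of $\mathcal V$ by convolution $f*h(V,F')=\sum_{F}f(V,F)h(F,F')$ (structure constants are polynomials in $q$, with $q$ replaced by $v^2$). $T_j\in\mathcal H_{\mathscr Y}$ is defined by $T_j(F,F')=v^{-1}t$ if $F_i=F'_i$ for all $i\ne j$ and $F_j\ne F'_j$, and $0$ otherwise. For $B\in\Pi$, $d(B)$ is the dimension of its orbit over $\overline{\mathbb F}_q$, $r(B)$ the dimension of the $G$-orbit of pairs $(V,V)$ with $\dim V_i/V_{i-1}=\sum_jb_{ij}$, and $\{e_{\mathbf r}\}=v^{-(d(B)-r(B))}t^{d(B)-r(B)}e_{\mathbf r}$. *)

(* Defs.v *)
From HB Require Import structures.
From mathcomp Require Import all_boot all_order all_algebra.
Set Implicit Arguments. Unset Strict Implicit. Unset Printing Implicit Defensive.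
Import GRing.Theory.
Local Open Scope ring_scope.

Section Flags.
Variables (K : finFieldType) (n d : nat).

(* subspaces of K^d, represented canonically by the square matrix <<A>> *)
Definition subsp := {A : 'M[K]_d | (<<A>>%MS == A)}.

Definition is_flagX (V : {ffun 'I_n.+1 -> subsp}) : bool :=
  [&& val (V ord0) == 0,
      \rank (val (V ord_max)) == d &
      [forall i : 'I_n, (val (V (inord i)) <= val (V (inord i.+1)))%MS]].
Definition flagX := {V : {ffun 'I_n.+1 -> subsp} | is_flagX V}.

Definition is_flagY (F : {ffun 'I_d.+1 -> subsp}) : bool :=
  [&& [forall i : 'I_d.+1, \rank (val (F i)) == i] &
      [forall i : 'I_d, (val (F (inord i)) <= val (F (inord i.+1)))%MS]].
Definition flagY := {F : {ffun 'I_d.+1 -> subsp} | is_flagY F}.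

Definition Vsp (V : flagX) (i : nat) : 'M[K]_d := val (val V (inord i)).
Definition Fsp (F : flagY) (j : nat) : 'M[K]_d := val (val F (inord j)).

(* entry (i+1, j+1) of the matrix of (V,F) (0-based i : 'I_n, j : 'I_d) *)
Definition orbmx (V : flagX) (F : flagY) (i : 'I_n) (j : 'I_d) : nat :=
  (\rank (Vsp V i + (Vsp V i.+1 :&: Fsp F j.+1))%MS
   - \rank (Vsp V i + (Vsp V i.+1 :&: Fsp F j))%MS)%N.

(* r : 'I_d -> 'I_n encodes the paper's r with r_c = val (r c) + 1;
   B(r) has entry (i,j) equal to 1 iff r j = i *)
Definition Bmx (r : 'I_d -> 'I_n) (i : 'I_n) (j : 'I_d) : nat := (r j == i).

(* r(B): dimension of the partial flag variety of type (m_1,...,m_n),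
   m_i = sum_j b_ij *)
Definition rowsum (r : 'I_d -> 'I_n) (i : 'I_n) : nat := (\sum_(j : 'I_d) Bmx r i j)%N.
Definition rdim (r : 'I_d -> 'I_n) : nat :=
  (\sum_(i : 'I_n) \sum_(k : 'I_n) ((i < k) * rowsum r i * rowsum r k))%N.
(* d(B): dimension of the orbit = r(B) + dimension of the fibre over V *)
Definition ddim (r : 'I_d -> 'I_n) : nat :=
  (rdim r + \sum_(i : 'I_n) \sum_(k : 'I_n) \sum_(j : 'I_d) \sum_(l : 'I_d)
     ((k <= i) && (j < l)) * Bmx r i j * Bmx r k l)%N.

Variables (R : comUnitRingType) (v t : R).

Definition e_r (r : 'I_d -> 'I_n) (V : flagX) (F : flagY) : R :=
  if [forall i, forall j, orbmx V F i j == Bmx r i j] then 1 else 0.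

Definition brk (r : 'I_d -> 'I_n) (V : flagX) (F : flagY) : R :=
  v ^- (ddim r - rdim r) * t ^+ (ddim r - rdim r) * e_r r V F.

Definition Tj (j : nat) (F F' : flagY) : R :=
  if [forall i : 'I_d.+1, (val i != j) ==> (val F i == val F' i)]
     && (Fsp F j != Fsp F' j) then v^-1 * t else 0.

Definition conv (f : flagX -> flagY -> R) (h : flagY -> flagY -> R)
  (V : flagX) (F' : flagY) : R := \sum_(F : flagY) f V F * h F F'.

End Flags.

Definition swapr (d n : nat) (a b : 'I_d) (r : 'I_d -> 'I_n) : 'I_d -> 'I_n :=
  fun c => if c == a then r b else if c == b then r a else r c.

(* Main.v *)
Require Import Defs.
From HB Require Import structures.
From mathcomp Require Import all_boot all_order all_algebra.
From mathcomp Require Import mxabelem zify ring.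
Set Implicit Arguments. Unset Strict Implicit. Unset Printing Implicit Defensive.
Import GRing.Theory.
Local Open Scope ring_scope.

Section Gen.
Variables (F : fieldType) (d : nat).
Implicit Types (A B P Q W X Y Z : 'M[F]_d).

Lemma rank_cap_eq X Y B : (X <= Y)%MS -> \rank (X :&: (Y :&: B))%MS = \rank (X :&: B)%MS.
Proof.
move=> sXY; apply/eqmx_rank/andP; split.
  by rewrite sub_capmx capmxSl (submx_trans (capmxSr _ _) (capmxSr _ _)).
by rewrite !sub_capmx capmxSl capmxSr (submx_trans (capmxSl _ _) sXY).
Qed.

Lemma g_rank Z A B : (A <= B)%MS -> \rank B = (\rank A).+1 ->
  \rank (Z :&: B)%MS = (\rank (Z :&: A)%MS + ~~ (Z :&: B <= A)%MS)%N.
Proof.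
move=> sAB rB.
have e1 : \rank (Z :&: A)%MS = \rank ((Z :&: B) :&: A)%MS.
  apply/eqmx_rank/andP; split.
    by rewrite !sub_capmx capmxSl capmxSr (submx_trans (capmxSr _ _) sAB).
  by rewrite !sub_capmx capmxSr (submx_trans (capmxSl _ _) (capmxSl _ _)).
have s := mxrank_sum_cap (Z :&: B)%MS A.
have h1 : (A <= (Z :&: B) + A)%MS by rewrite addsmxSr.
have h2 : ((Z :&: B) + A <= B)%MS by rewrite addsmx_sub capmxSr sAB.
have r2 := mxrankS h2.
have L := mxrank_leqif_sup h1.
case: (boolP (Z :&: B <= A)%MS) => hZ /=.
  have : ((Z :&: B) + A <= A)%MS by rewrite addsmx_sub hZ submx_refl.
  move=> h3; have := mxrankS h3; have := mxrankS h1; lia.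
have lt : (\rank A < \rank ((Z :&: B) + A)%MS)%N.
  rewrite (ltn_leqif L) addsmx_sub submx_refl andbT; exact: hZ.
lia.
Qed.

Lemma col_diff X Y A B : (X <= Y)%MS -> (A <= B)%MS -> \rank B = (\rank A).+1 ->
  (\rank (X + (Y :&: B))%MS - \rank (X + (Y :&: A))%MS)%N =
  ((~~ (Y :&: B <= A)%MS : nat) - (~~ (X :&: B <= A)%MS : nat))%N.
Proof.
move=> sXY sAB rB.
have s1 := mxrank_sum_cap X (Y :&: B)%MS.
have s2 := mxrank_sum_cap X (Y :&: A)%MS.
rewrite (rank_cap_eq B sXY) in s1; rewrite (rank_cap_eq A sXY) in s2.
have gY := g_rank Y sAB rB; have gX := g_rank X sAB rB.
have mono : (Y :&: B <= A)%MS -> (X :&: B <= A)%MS.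
  by move=> h; apply: submx_trans h; apply: capmxS.
move: mono gY gX.
case: (Y :&: B <= A)%MS; case: (X :&: B <= A)%MS => //= mono gY gX; try lia.

Qed.

Lemma a_form P W Q Z : (P <= W)%MS -> (W <= Q)%MS -> \rank W = (\rank P).+1 ->
  (Z :&: W <= P)%MS = ~~ (W <= P + (Z :&: Q))%MS.
Proof.
move=> sPW sWQ rW; apply/idP/idP.
  move=> h; apply/negP => hW.
  have : (W <= P)%MS.
    have e := matrix_modl (Z :&: Q)%MS sPW.
    have : (W <= (P + (Z :&: Q)) :&: W)%MS by rewrite sub_capmx hW submx_refl.
    rewrite -e => h'; apply: submx_trans h' _.
    rewrite addsmx_sub submx_refl /=.
    apply: submx_trans h; apply: capmxS; [exact: capmxSl | exact: submx_refl].
  move/mxrankS; lia.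
move=> hn; apply: contraNT hn => h.
set S := (P + (Z :&: W))%MS.
have h1 : (P <= S)%MS by rewrite addsmxSl.
have h2 : (S <= W)%MS by rewrite addsmx_sub sPW capmxSr.
have L := mxrank_leqif_sup h1.
have lt : (\rank P < \rank S)%N.
  rewrite (ltn_leqif L); apply: contra h => hS.
  exact: submx_trans (addsmxSr _ _) hS.
have r2 := mxrankS h2.
have L2 := mxrank_leqif_sup h2.
have : (W <= S)%MS by rewrite -(L2.2); apply/eqP; lia.
move=> hWS; apply: submx_trans hWS _; apply: addsmxS; first exact: submx_refl.
apply: capmxS; [exact: submx_refl | exact: sWQ].
Qed.

End Gen.

Lemma step_char (N m : nat) (h : nat -> bool) : h 0 = false ->
  (forall k, (k < N)%N -> h k -> h k.+1) ->
  (forall i, (i < N)%N -> ((h i.+1 : nat) - (h i : nat))%N = (m == i) :> nat) <->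
  (forall k, (k <= N)%N -> h k = (m < k)%N).
Proof.
move=> h0 mono; split.
  move=> H; elim=> [|k IH] hk; first by rewrite h0.
  have := H k hk; have := mono k hk; have := IH (ltnW hk).
  case: (h k); case: (h k.+1) => //= -> //=; case: ltngtP => //=; lia.
move=> H i hi; rewrite (H _ hi) (H _ (ltnW hi)).
case: ltngtP => //=; lia.
Qed.

Section FlagFacts.
Variables (K : finFieldType) (n d : nat) (V : flagX K n d).

Lemma Vsp0 : Vsp V 0 = 0.
Proof.
rewrite /Vsp; have -> : (inord 0 : 'I_n.+1) = ord0 by apply: val_inj; rewrite /= inordK.
by have := valP V; rewrite /is_flagX => /and3P [/eqP ->].
Qed.

Lemma Vsp_mono i : (i < n)%N -> (Vsp V i <= Vsp V i.+1)%MS.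
Proof.
move=> hi; have := valP V; rewrite /is_flagX => /and3P [_ _ /forallP /(_ (Ordinal hi))].
by rewrite /Vsp.
Qed.

Lemma Vsp_le i k : (i <= k <= n)%N -> (Vsp V i <= Vsp V k)%MS.
Proof.
move=> /andP []; elim: k => [|k IH].
  by rewrite leqn0 => /eqP -> _.
rewrite leq_eqVlt => /orP [/eqP -> //|]; rewrite ltnS => hik hk.
apply: submx_trans (IH hik (ltnW hk)) (Vsp_mono hk).
Qed.

Lemma colcondE (A B : 'M[K]_d) (m : nat) : (A <= B)%MS -> \rank B = (\rank A).+1 ->
  [forall i : 'I_n, (\rank (Vsp V i + (Vsp V i.+1 :&: B))%MS
       - \rank (Vsp V i + (Vsp V i.+1 :&: A))%MS)%N == (m == i) :> nat] =
  [forall k : 'I_n.+1, (Vsp V k :&: B <= A)%MS == (k <= m)%N].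
Proof.
move=> sAB rB.
have := @step_char n m (fun k => ~~ (Vsp V k :&: B <= A)%MS).
rewrite Vsp0 cap0mx sub0mx => /(_ erefl) H.
have mono : forall k, (k < n)%N -> ~~ (Vsp V k :&: B <= A)%MS -> ~~ (Vsp V k.+1 :&: B <= A)%MS.
  move=> k hk; apply: contra => h; apply: submx_trans h.
  by apply: capmxS; [exact: Vsp_mono | exact: submx_refl].
have {}H := H mono.
have cd : forall i : 'I_n, (\rank (Vsp V i + (Vsp V i.+1 :&: B))%MS
       - \rank (Vsp V i + (Vsp V i.+1 :&: A))%MS)%N =
   ((~~ (Vsp V i.+1 :&: B <= A)%MS : nat) - (~~ (Vsp V i :&: B <= A)%MS : nat))%N.
  by move=> i; apply: col_diff => //; apply: Vsp_mono.
apply/forallP/forallP.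
  move=> E k; have [H1 _] := H.
  have H0 : forall i, (i < n)%N -> ((~~ (Vsp V i.+1 :&: B <= A)%MS : nat) - (~~ (Vsp V i :&: B <= A)%MS : nat))%N = (m == i).
    by move=> i hi; have := E (Ordinal hi); rewrite cd => /eqP.
  by have := H1 H0 k (ltn_ord k); rewrite [(k <= m)%N]leqNgt => <-; rewrite negbK.
move=> E i; rewrite cd; apply/eqP; have [_ H2] := H; apply: H2 => // k hk.
by have := E (Ordinal (hk : (k < n.+1)%N)); move=> /eqP /= ->; rewrite [(k <= m)%N]leqNgt negbK.
Qed.


End FlagFacts.

Section Sub.
Variables (K : finFieldType) (d : nat).

Lemma mksub_proof (A : 'M[K]_d) : (<< <<A>>%MS >>%MS == <<A>>%MS).
Proof. by rewrite genmx_id. Qed.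
Definition mksub (A : 'M[K]_d) : subsp K d := exist _ <<A>>%MS (mksub_proof A).
Lemma val_mksub A : val (mksub A) = <<A>>%MS. Proof. by []. Qed.

Lemma subsp_genK (W : subsp K d) : <<val W>>%MS = val W.
Proof. by apply/eqP; exact: (valP W). Qed.

Lemma subsp_eq (W1 W2 : subsp K d) : (val W1 == val W2)%MS -> W1 = W2.
Proof. by move=> /genmxP h; apply: val_inj; rewrite -subsp_genK h subsp_genK. Qed.

Lemma subsp_eq_mk (W : subsp K d) A : (val W == A)%MS -> W = mksub A.
Proof. move=> h; apply: subsp_eq; rewrite val_mksub; apply/eqmxP; exact: eqmx_trans (eqmxP h) (eqmx_sym (genmxE A)). Qed.

Lemma mksub_eqmx (A : 'M[K]_d) : (val (mksub A) :=: A)%MS.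
Proof. rewrite val_mksub; exact: genmxE. Qed.
End Sub.

Section Lines.
Variables (K : finFieldType) (d : nat) (P Q : 'M[K]_d) (p : nat).
Hypotheses (sPQ : (P <= Q)%MS) (rP : \rank P = p) (rQ : \rank Q = p.+2).

Definition Ls := [set W : subsp K d | (\rank (val W) == p.+1) && (P <= val W)%MS && (val W <= Q)%MS].

Lemma inLs W : W \in Ls -> [/\ \rank (val W) = p.+1, (P <= val W)%MS & (val W <= Q)%MS].
Proof. by rewrite inE => /andP [/andP [/eqP -> ->] ->]. Qed.

Definition aW (W : subsp K d) (Z : 'M[K]_d) := (Z :&: val W <= P)%MS.
Definition bW (W : subsp K d) (Z : 'M[K]_d) := (Z :&: Q <= val W)%MS.

Lemma ab_form W Z : W \in Ls ->
  aW W Z = ~~ (val W <= P + (Z :&: Q))%MS /\ bW W Z = (P + (Z :&: Q) <= val W)%MS.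
Proof.
move=> /inLs [rW sPW sWQ]; split; first by rewrite /aW (a_form Z sPW sWQ) // rW rP.
by rewrite /bW addsmx_sub sPW.
Qed.

Lemma types Z :
  (forall W, W \in Ls -> aW W Z && bW W Z) \/
  (forall W, W \in Ls -> ~~ aW W Z && ~~ bW W Z) \/
  (exists2 L, L \in Ls & forall W, W \in Ls -> aW W Z = (W != L) /\ bW W Z = (W == L)).
Proof.
set U := (P + (Z :&: Q))%MS.
have sPU : (P <= U)%MS by rewrite addsmxSl.
have sUQ : (U <= Q)%MS by rewrite addsmx_sub sPQ capmxSr.
have r1 := mxrankS sPU; have r2 := mxrankS sUQ.
have L1 := mxrank_leqif_sup sPU; have L2 := mxrank_leqif_sup sUQ.
have [rU|rU|rU] : [\/ \rank U = p, \rank U = p.+1 | \rank U = p.+2] by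
  case: (ltngtP (\rank U) p.+1) => h; [apply: Or31 | apply: Or33 | apply: Or32]; lia.
- left => W hW; have [-> ->] := ab_form Z hW; rewrite -/U; have [rW sPW sWQ] := inLs hW.
  have sUP : (U <= P)%MS by rewrite -(L1.2); apply/eqP; lia.
  rewrite (submx_trans sUP sPW) andbT; apply/negP => /mxrankS; lia.
- right; right; exists (mksub U).
    rewrite inE !mksub_eqmx rU eqxx sPU sUQ //.
  move=> W hW; have [-> ->] := ab_form Z hW; rewrite -/U; have [rW sPW sWQ] := inLs hW.
  have e1 : (val W <= U)%MS = (W == mksub U).
    apply/idP/eqP => [h|->]; last by rewrite mksub_eqmx submx_refl.
    apply: subsp_eq_mk; have L := mxrank_leqif_eq h; rewrite -(L.2); apply/eqP; lia.
  have e2 : (U <= val W)%MS = (W == mksub U).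
    apply/idP/eqP => [h|->]; last by rewrite mksub_eqmx submx_refl.
    apply: subsp_eq_mk; have L := mxrank_leqif_eq h; apply/eqmxP; apply: eqmx_sym; apply/eqmxP; rewrite -(L.2); apply/eqP; lia.
  by rewrite e1 e2.
- right; left => W hW; have [-> ->] := ab_form Z hW; rewrite -/U; have [rW sPW sWQ] := inLs hW.
  have sQU : (Q <= U)%MS by rewrite -(L2.2); apply/eqP; lia.
  rewrite (submx_trans sWQ sQU) /=; apply/negP => /mxrankS HH; have := leq_trans HH (eq_leq rW); lia.
Qed.

Lemma uniq_line Z Z' W W' : (Z <= Z')%MS -> W \in Ls -> W' \in Ls ->
  ~~ aW W Z -> bW W Z -> ~~ aW W' Z' -> bW W' Z' -> W = W'.
Proof.
move=> sZ hW hW'; have [-> ->] := ab_form Z hW; have [-> ->] := ab_form Z' hW'.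
rewrite !negbK => h1 h2 h3 h4.
have [rW _ _] := inLs hW; have [rW' _ _] := inLs hW'.
have s : (val W <= val W')%MS.
  apply: submx_trans h1 _; apply: submx_trans h4; apply: addsmxS; first exact: submx_refl.
  by apply: capmxS => //; exact: submx_refl.
apply: subsp_eq; have L := mxrank_leqif_eq s; rewrite -(L.2); apply/eqP; lia.
Qed.


Lemma card_sep (T : finType) (A : {set T}) (c : pred T) :
  #|[set x in A | c x]| = (\sum_(x in A) (c x : nat))%N.
Proof.
rewrite -sum1_card big_mkcond [RHS]big_mkcond; apply: eq_bigr => x _.
by rewrite !inE; case: (x \in A); case: (c x).
Qed.

Lemma card_Ls : #|Ls| = #|K|.+1.
Proof.
set q := #|K|.
have q1 : (1 < q)%N := card_finNzRing_gt1 K.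
set X := [set x : 'rV[K]_d | (x <= Q)%MS && ~~ (x <= P)%MS].
have cX : #|X| = (q ^ p.+2 - q ^ p)%N.
  have -> : X = rowg Q :\: rowg P by apply/setP => x; rewrite !inE andbC.
  by rewrite cardsDS ?rowgS // !card_rowg rP rQ.
have cY : forall W, W \in Ls -> #|[set x in X | (x <= val W)%MS]| = (q ^ p.+1 - q ^ p)%N.
  move=> W hW; have [rW sPW sWQ] := inLs hW.
  have -> : [set x in X | (x <= val W)%MS] = rowg (val W) :\: rowg P.
    apply/setP => x; rewrite !inE; case: (boolP (x <= val W)%MS) => h; last by rewrite !andbF.
    by rewrite (submx_trans h sWQ) andbT.
  by rewrite cardsDS ?rowgS // !card_rowg rP rW.
have c1 : forall x, x \in X -> #|[set W in Ls | (x <= val W)%MS]| = 1%N.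
  move=> x; rewrite inE => /andP [xQ xP].
  set S := (P + x)%MS.
  have sPS : (P <= S)%MS by rewrite addsmxSl.
  have sxS : (x <= S)%MS by rewrite addsmxSr.
  have sSQ : (S <= Q)%MS by rewrite addsmx_sub sPQ xQ.
  have rS : \rank S = p.+1.
    have s := mxrank_sum_cap P x; have := rank_leq_row x.
    have L := mxrank_leqif_sup sPS.
    have : (\rank P < \rank S)%N.
      rewrite (ltn_leqif L); apply: contra xP => h; exact: submx_trans sxS h.
    rewrite -/S in s; lia.
  have -> : [set W in Ls | (x <= val W)%MS] = [set mksub S].
    apply/setP => W; rewrite !inE; apply/andP/eqP.
      move=> [/andP [/andP [/eqP rW sPW] sWQ] xW].
      have sSW : (S <= val W)%MS by rewrite addsmx_sub sPW xW.
      apply: subsp_eq_mk; have L := mxrank_leqif_eq sSW.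
      apply/eqmxP; apply: eqmx_sym; apply/eqmxP; rewrite -(L.2); apply/eqP.
      by rewrite rS rW.
    move=> ->; rewrite !mksub_eqmx rS eqxx sPS sSQ sxS //.
  by rewrite cards1.
have e : (\sum_(x in X) #|[set W in Ls | (x <= val W)%MS]| =
          \sum_(W in Ls) #|[set x in X | (x <= val W)%MS]|)%N.
  rewrite (eq_bigr (fun x => \sum_(W in Ls) ((x <= val W)%MS : nat))%N); last first.
    by move=> x _; rewrite card_sep.
  rewrite exchange_big; apply: eq_bigr => W _; by rewrite card_sep.
rewrite (eq_bigr (fun _ => 1%N)) in e; last by move=> x hx; rewrite c1.
rewrite [in RHS](eq_bigr (fun _ => (q ^ p.+1 - q ^ p)%N)) in e; last by move=> W hW; rewrite cY.
rewrite sum1_card sum_nat_const cX in e.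
have hu : (0 < q ^ p)%N by rewrite expn_gt0; lia.
move: e; rewrite !expnS; set u := (q ^ p)%N => e.
have pos : (0 < q * u - u)%N by nia.
apply/eqP; rewrite -(eqn_pmul2r pos); apply/eqP; rewrite -e.
have h1 : (q * (q * u) - u = (q * u - u) * q + (q * u - u))%N.
  have : (u <= q * u)%N by nia.
  have : (q * u <= q * (q * u))%N by nia.
  rewrite mulnBl mulnA; nia.
rewrite h1 mulSn; lia.
Qed.

End Lines.

Section Abs.
Variables (T : finType) (Ls : {set T}) (q N : nat) (W0 : T).
Variables (a b : T -> 'I_N -> bool).
Hypotheses (hcard : #|Ls| = q.+1) (hW0 : W0 \in Ls).
Hypothesis htyp : forall k,
  (forall W, W \in Ls -> a W k && b W k) \/
  (forall W, W \in Ls -> ~~ a W k && ~~ b W k) \/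
  (exists2 L, L \in Ls & forall W, W \in Ls -> a W k = (W != L) /\ b W k = (W == L)).
Hypothesis huniq : forall k k' W W', W \in Ls -> W' \in Ls ->
  ~~ a W k -> b W k -> ~~ a W' k' -> b W' k' -> W = W'.

Definition Cab W m1 m2 := [forall k, a W k == (k <= m1)%N] && [forall k, b W k == (k <= m2)%N].
Definition cnt m1 m2 := (\sum_(W in Ls | W != W0) (Cab W m1 m2 : nat))%N.

Definition caseA := (forall m1 m2, cnt m1 m2 = q * Cab W0 m1 m2)%N /\
  (forall m1 m2, (m1 < N)%N -> (m2 < N)%N -> Cab W0 m1 m2 -> m1 = m2).
Definition caseBL := (forall m1 m2, cnt m1 m2 = q * Cab W0 m2 m1)%N /\
  (forall m1 m2, Cab W0 m1 m2 -> (m1 < m2)%N).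
Definition caseBW := (forall m1 m2, cnt m1 m2 = Cab W0 m2 m1 + (q - 1) * Cab W0 m1 m2)%N /\
  (forall m1 m2, Cab W0 m1 m2 -> (m2 < m1)%N).

Lemma card_minus1 : #|[pred W | (W \in Ls) && (W != W0)]| = q.
Proof.
have h := cardD1 W0 Ls; rewrite hW0 hcard in h.
have -> : q = #|[predD1 Ls & W0]| by move: h; lia.
by apply: eq_card => W; rewrite !inE andbC.
Qed.

Lemma abs_cases : caseA \/ caseBL \/ caseBW.
Proof.
case: (pickP (fun L => (L \in Ls) && [exists k, ~~ a L k && b L k])) =>
  [L /andP [hL /existsP [k0 /andP [aL bL]]] | none].
-
  have tk : forall k, (forall W, W \in Ls -> a W k && b W k) \/
     (forall W, W \in Ls -> ~~ a W k && ~~ b W k) \/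
     (forall W, W \in Ls -> a W k = (W != L) /\ b W k = (W == L)).
    move=> k; case: (htyp k) => [h|[h|[L' hL' h]]]; [by left | by right; left|].
    right; right; suff -> : L = L' by [].
    have [e1 e2] := h L' hL'.
    apply: (@huniq k0 k L L' hL hL' aL bL); by rewrite ?e1 ?e2 eqxx.
  have F1 : forall W W' k, W \in Ls -> W' \in Ls -> W != L -> W' != L ->
      a W k = a W' k /\ b W k = b W' k.
    move=> W W' k hW hW' nW nW'; case: (tk k) => [h|[h|h]].
    + by have /andP [-> ->] := h W hW; have /andP [-> ->] := h W' hW'.
    + by have /andP [/negbTE -> /negbTE ->] := h W hW; have /andP [/negbTE -> /negbTE ->] := h W' hW'.
    + by have [-> ->] := h W hW; have [-> ->] := h W' hW'; rewrite nW nW' (negbTE nW) (negbTE nW').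
  have F2 : forall W k, W \in Ls -> W != L -> a L k = b W k /\ b L k = a W k.
    move=> W k hW nW; case: (tk k) => [h|[h|h]].
    + by have /andP [-> ->] := h W hW; have /andP [-> ->] := h L hL.
    + by have /andP [/negbTE -> /negbTE ->] := h W hW; have /andP [/negbTE -> /negbTE ->] := h L hL.
    + by have [-> ->] := h W hW; have [-> ->] := h L hL; rewrite eqxx nW (negbTE nW).
  have FL : forall m1 m2, Cab L m1 m2 -> (m1 < m2)%N.
    move=> m1 m2 /andP [/forallP /(_ k0) h1 /forallP /(_ k0) h2].
    move: h1 h2; rewrite (negbTE aL) bL => /eqP h1 /eqP h2; lia.
  have FW : forall W m1 m2, W \in Ls -> W != L -> Cab W m1 m2 -> (m2 < m1)%N.
    move=> W m1 m2 hW nW /andP [/forallP /(_ k0) h1 /forallP /(_ k0) h2].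
    have [e1 e2] := F2 W k0 hW nW.
    move: h1 h2; rewrite -e1 -e2 (negbTE aL) bL => /eqP h1 /eqP h2; lia.
  have CF1 : forall W W' m1 m2, W \in Ls -> W' \in Ls -> W != L -> W' != L ->
      Cab W m1 m2 = Cab W' m1 m2.
    move=> W W' m1 m2 hW hW' nW nW'; rewrite /Cab.
    congr (_ && _); apply: eq_forallb => k; have [e1 e2] := F1 W W' k hW hW' nW nW'; by rewrite ?e1 ?e2.
  have CF2 : forall W m1 m2, W \in Ls -> W != L -> Cab L m1 m2 = Cab W m2 m1.
    move=> W m1 m2 hW nW; rewrite /Cab andbC.
    congr (_ && _); apply: eq_forallb => k; have [e1 e2] := F2 W k hW nW; by rewrite ?e1 ?e2.
  case: (eqVneq W0 L) => [eW0|nW0].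
  + right; left; split => [m1 m2|m1 m2]; last by rewrite eW0; apply: FL.
    rewrite /cnt (eq_bigr (fun _ => Cab W0 m2 m1 : nat)); last first.
      by move=> W /andP [hW nW]; rewrite eW0 (CF2 W m2 m1 hW) // -eW0.
    by rewrite sum_nat_const card_minus1.
  + right; right; split => [m1 m2|m1 m2]; last by apply: FW.
    rewrite /cnt (bigD1 L) /=; last by rewrite hL eq_sym nW0.
    rewrite (CF2 W0 m1 m2 hW0 nW0); congr (_ + _)%N.
    rewrite (eq_bigr (fun _ => Cab W0 m1 m2 : nat)); last first.
      by move=> W /andP [/andP [hW nW] nWL]; rewrite (CF1 W W0 m1 m2).
    rewrite sum_nat_const; congr (_ * _)%N.
    have := cardD1 L [pred W | (W \in Ls) && (W != W0)].
    rewrite card_minus1 inE hL eq_sym nW0 add1n => ->; rewrite subSS subn0.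
    apply: eq_card => W; rewrite !inE -topredE /=; by case: (W \in Ls); case: (W == L); case: (W == W0).
-
  have F : forall W k, W \in Ls -> a W k = a W0 k /\ b W k = b W0 k /\ a W k = b W k.
    move=> W k hW; have nW := none W; rewrite hW /= in nW.
    have nW0 := none W0; rewrite hW0 /= in nW0.
    move/existsPn: nW => /(_ k) nW; move/existsPn: nW0 => /(_ k) nW0.
    case: (htyp k) => [h|[h|[L' hL' h]]].
    + by have /andP [-> ->] := h W hW; have /andP [-> ->] := h W0 hW0.
    + by have /andP [/negbTE -> /negbTE ->] := h W hW; have /andP [/negbTE -> /negbTE ->] := h W0 hW0.
    + have nL := none L'; rewrite hL' /= in nL; move/existsPn: nL => /(_ k).
      by have [-> ->] := h L' hL'; rewrite eqxx.
  left; split => [m1 m2|m1 m2 h1 h2].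
    rewrite /cnt (eq_bigr (fun _ => Cab W0 m1 m2 : nat)); last first.
      move=> W /andP [hW _]; rewrite /Cab; congr (_ && _); apply: eq_forallb => k;
      by have [-> [-> _]] := F W k hW.
    by rewrite sum_nat_const card_minus1.
  have hm : (maxn m1 m2 < N)%N by rewrite gtn_max h1 h2.
  move=> /andP [/forallP /(_ (Ordinal hm)) e1 /forallP /(_ (Ordinal hm)) e2].
  have [_ [_ e]] := F W0 (Ordinal hm) hW0.
  move: e1 e2; rewrite e => /eqP -> /eqP /=; case: (leqP (maxn m1 m2) m1); case: (leqP (maxn m1 m2) m2) => //=; lia.
Qed.

Lemma cnt_vals m1 m2 : (m1 < N)%N -> (m2 < N)%N ->
  [/\ (m1 < m2)%N -> cnt m1 m2 = Cab W0 m2 m1,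
      m1 = m2 -> cnt m1 m2 = (q * Cab W0 m1 m2)%N &
      (m2 < m1)%N -> cnt m1 m2 = ((q - 1) * Cab W0 m1 m2 + q * Cab W0 m2 m1)%N].
Proof.
move=> h1 h2.
case: abs_cases => [[E H]|[[E H]|[E H]]]; rewrite E;
  case: (boolP (Cab W0 m1 m2)) => c1; case: (boolP (Cab W0 m2 m1)) => c2;
  try have := H _ _ c1; try have := H _ _ c2; try have := H _ _ h1 h2 c1; try have := H _ _ h2 h1 c2;
  split => /= *; lia.
Qed.
End Abs.

Lemma sum_ind (m : nat) (c : 'I_m) (G : 'I_m -> nat) :
  (\sum_(i : 'I_m) ((c == i) * G i))%N = G c.
Proof.
rewrite (bigD1 c) //= eqxx mul1n big1 ?addn0 // => i /negbTE.
by rewrite eq_sym => ->.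
Qed.

Definition Sfib n d (r : 'I_d -> 'I_n) : nat :=
  (\sum_(i : 'I_n) \sum_(k : 'I_n) \sum_(j : 'I_d) \sum_(l : 'I_d)
     ((k <= i) && (j < l)) * Bmx r i j * Bmx r k l)%N.

Lemma D_Sfib n d (r : 'I_d -> 'I_n) : (ddim r - rdim r)%N = Sfib r.
Proof. by rewrite /ddim addKn. Qed.

Lemma Sfib_simpl n d (r : 'I_d -> 'I_n) :
  Sfib r = (\sum_(j : 'I_d) \sum_(l : 'I_d) ((r l <= r j) && (j < l)))%N.
Proof.
rewrite /Sfib.
under eq_bigr => i _ do rewrite exchange_big.
rewrite exchange_big.
under eq_bigr => j _ do under eq_bigr => i _ do rewrite exchange_big.
under eq_bigr => j _ do rewrite exchange_big.
apply: eq_bigr => j _; apply: eq_bigr => l _.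
under eq_bigr => i _ do under eq_bigr => k _ do
  rewrite /Bmx [X in (X * _)%N]mulnC -mulnA [X in (_ * X)%N]mulnC.
under eq_bigr => i _ do rewrite -big_distrr /= (@sum_ind _ (r l) (fun k => ((k <= i)%N && (j < l)%N) : nat)).
by rewrite (@sum_ind _ (r j) (fun i => ((r l <= i)%N && (j < l)%N) : nat)).
Qed.

Section Swap.
Variables (d : nat) (a b : 'I_d).
Hypothesis hab : val b = (val a).+1.
Definition tau (c : 'I_d) := if c == a then b else if c == b then a else c.

Lemma ab_neq : (a == b) = false.
Proof. by apply/negbTE/negP => /eqP ab; move: hab; rewrite ab; lia. Qed.

Lemma tauK : involutive tau.
Proof.
move=> c; rewrite /tau; case: (eqVneq c a) => [->|ca]; first by rewrite eqxx eq_sym ab_neq.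
case: (eqVneq c b) => [->|cb]; first by rewrite eqxx.
by rewrite (negbTE ca) (negbTE cb).
Qed.

Lemma tau_inj : injective tau. Proof. exact: inv_inj tauK. Qed.

Lemma swapr_tau n (r : 'I_d -> 'I_n) c : swapr a b r c = r (tau c).
Proof. by rewrite /swapr /tau; case: (c == a); case: (c == b). Qed.

Lemma tau_lt j l : ((tau j < tau l)%N + ((j == a) && (l == b)) =
                    (j < l)%N + ((j == b) && (l == a)))%N.
Proof.
have E : forall x : 'I_d, \val x = nat_of_ord x by [].
have hab' : nat_of_ord b = (nat_of_ord a).+1 by rewrite -!E.
rewrite /tau -!val_eqE /= ?E.
case: (eqVneq (j : nat) a) => ja; case: (eqVneq (j : nat) b) => jb;
case: (eqVneq (l : nat) a) => la; case: (eqVneq (l : nat) b) => lb;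
rewrite /= ?ja ?jb ?la ?lb /=; lia.
Qed.

Lemma Sfib_swap n (r : 'I_d -> 'I_n) :
  (Sfib (swapr a b r) + (r b <= r a) = Sfib r + (r a <= r b))%N.
Proof.
rewrite !Sfib_simpl.
under eq_bigr => j _ do under eq_bigr => l _ do rewrite !swapr_tau.
rewrite (reindex_inj tau_inj).
under eq_bigr => j _ do rewrite (reindex_inj tau_inj).
under eq_bigr => j _ do under eq_bigr => l _ do rewrite !tauK.
have e1 : (r b <= r a)%N = (\sum_(j : 'I_d) \sum_(l : 'I_d) ((j == a) && (l == b)) * (r l <= r j))%N :> nat.
  rewrite (eq_bigr (fun j => (a == j) * \sum_(l : 'I_d) ((b == l) * (r l <= r j)))%N).
    by rewrite (@sum_ind _ a (fun j => \sum_(l : 'I_d) ((b == l) * (r l <= r j)))%N) sum_ind.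
  move=> j _; rewrite big_distrr /=; apply: eq_bigr => l _.
  by rewrite (eq_sym a) (eq_sym b); case: (j == a); case: (l == b); rewrite /= ?mul1n ?mul0n.
have e2 : (r a <= r b)%N = (\sum_(j : 'I_d) \sum_(l : 'I_d) ((j == b) && (l == a)) * (r l <= r j))%N :> nat.
  rewrite (eq_bigr (fun j => (b == j) * \sum_(l : 'I_d) ((a == l) * (r l <= r j)))%N).
    by rewrite (@sum_ind _ b (fun j => \sum_(l : 'I_d) ((a == l) * (r l <= r j)))%N) sum_ind.
  move=> j _; rewrite big_distrr /=; apply: eq_bigr => l _.
  by rewrite (eq_sym a) (eq_sym b); case: (j == b); case: (l == a); rewrite /= ?mul1n ?mul0n.
rewrite e1 e2 -!big_split /=; apply: eq_bigr => j _; rewrite -!big_split /=.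
apply: eq_bigr => l _; have := tau_lt j l.
case: (r l <= r j)%N; case: (tau j < tau l)%N; case: (j < l)%N;
  case: ((j == a) && (l == b)); case: ((j == b) && (l == a)) => //=.
Qed.
End Swap.

Section FlagY.
Variables (K : finFieldType) (d : nat).

Lemma Fsp_rank (F : flagY K d) i : (i <= d)%N -> \rank (Fsp F i) = i.
Proof.
move=> hi; have := valP F; rewrite /is_flagY => /andP [/forallP /(_ (inord i)) /eqP h _].
by rewrite /Fsp h inordK.
Qed.

Lemma Fsp_mono (F : flagY K d) i : (i < d)%N -> (Fsp F i <= Fsp F i.+1)%MS.
Proof.
move=> hi; have := valP F; rewrite /is_flagY => /andP [_ /forallP /(_ (Ordinal hi))].
by rewrite /Fsp.
Qed.
End FlagY.

Section Alg.
Variables (R : comUnitRingType) (v w t : R) (q : nat).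
Hypotheses (hw : w * v = 1) (hq : v ^+ 2 = q%:R) (hq1 : (1 <= q)%N).

Lemma alg_lt S (o y : bool) :
  w^+S * t^+S * (w*t) * ((o * y)%N)%:R = w^+S.+1 * t^+S.+1 * ((o && y) : nat)%:R.
Proof. rewrite -mulnb !natrM !exprS; ring. Qed.

Lemma alg_eq S (o x : bool) :
  w^+S * t^+S * (w*t) * ((o * (q * x))%N)%:R = v * t * (w^+S * t^+S * ((o && x) : nat)%:R).
Proof.
rewrite -mulnb !natrM -hq.
transitivity (w^+S * t^+S * t * (o%:R : R) * (x%:R : R) * ((w * v) * v)); first ring.
by rewrite hw; ring.
Qed.

Lemma alg_gt S (o x y : bool) :
  w^+S.+1 * t^+S.+1 * (w*t) * ((o * ((q - 1) * x + q * y))%N)%:R =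
  (v*t - w*t) * (w^+S.+1 * t^+S.+1 * ((o && x) : nat)%:R) +
  t^+2 * (w^+S * t^+S * ((o && y) : nat)%:R).
Proof.
rewrite -!mulnb !natrM natrD !natrM natrB // -hq !exprS.
transitivity (w^+S * t^+S * t^+2 * (o%:R : R) *
   (((w*v)^+2 - w^+2) * (x%:R : R) + (w*v)^+2 * (y%:R : R))); first ring.
rewrite [RHS](_ : _ = w^+S * t^+S * t^+2 * (o%:R : R) *
   (((w*v) - w^+2) * (x%:R : R) + (y%:R : R))); last ring.
by rewrite hw; ring.
Qed.
End Alg.

Section Main.
Variables (K : finFieldType) (n d : nat) (a b : 'I_d).
Hypothesis hab : val b = (val a).+1.
Variable (F' : flagY K d).

Definition P0 := Fsp F' a.
Definition Q0 := Fsp F' b.+1.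
Definition W0 : subsp K d := val F' (inord b).
Definition LsM := Ls P0 Q0 a.

Lemma hb : (b < d)%N. Proof. exact: ltn_ord. Qed.
Lemma ha : (a < d)%N. Proof. exact: ltn_ord. Qed.

Lemma rP0 : \rank P0 = a. Proof. by rewrite Fsp_rank // ltnW // ha. Qed.
Lemma rQ0 : \rank Q0 = (val a).+2.
Proof. rewrite /Q0 Fsp_rank; first by rewrite hab. exact: hb. Qed.
Lemma W0E : val W0 = Fsp F' b. Proof. by []. Qed.
Lemma sPW0 : (P0 <= val W0)%MS.
Proof. by rewrite W0E /P0 hab; apply: Fsp_mono; exact: ha. Qed.
Lemma sW0Q : (val W0 <= Q0)%MS.
Proof. by rewrite W0E /Q0; apply: Fsp_mono; exact: hb. Qed.
Lemma sPQ0 : (P0 <= Q0)%MS. Proof. exact: submx_trans sPW0 sW0Q. Qed.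
Lemma W0_in : W0 \in LsM.
Proof. rewrite inE sPW0 sW0Q W0E Fsp_rank; first by rewrite hab eqxx. exact: ltnW hb. Qed.

Definition psi0 (W : subsp K d) : {ffun 'I_d.+1 -> subsp K d} :=
  [ffun i : 'I_d.+1 => if val i == val b then W else val F' i].

Lemma psi0E W k : (k <= d)%N -> psi0 W (inord k) = if k == val b then W else val F' (inord k).
Proof.
move=> hk; rewrite ffunE; have -> : \val (inord k : 'I_d.+1) = k by exact: inordK.
by [].
Qed.


Lemma nab : (val a == val b) = false.
Proof. rewrite hab; apply/negbTE; lia. Qed.

Lemma psi0_flagE W : is_flagY (psi0 W) = (W \in LsM).
Proof.
apply/idP/idP.
  move=> /andP [/forallP hr /forallP hm].
  have e1 : \rank (val (psi0 W (inord b))) == nat_of_ord (inord b : 'I_d.+1) := hr (inord b).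
  have hb' : (val b <= d)%N := ltnW hb.
  have ha' : (val a <= d)%N := ltnW ha.
  have hb2 : ((val b).+1 <= d)%N := hb.
  have ha2 : ((val a).+1 <= d)%N := ha.
  rewrite (psi0E W hb') eqxx inordK in e1; last exact: hb'.
  have e2 : (val (psi0 W (inord a)) <= val (psi0 W (inord a.+1)))%MS := hm (Ordinal ha).
  rewrite (psi0E W ha') (psi0E W ha2) nab -hab eqxx in e2.
  have e3 : (val (psi0 W (inord b)) <= val (psi0 W (inord b.+1)))%MS := hm (Ordinal hb).
  have nb : (val b).+1 == val b = false by apply/negbTE; lia.
  rewrite (psi0E W hb') (psi0E W hb2) nb eqxx in e3.
  by rewrite inE -hab e1 e2 e3.
move=> hW; have [rW sPW sWQ] := inLs hW.
apply/andP; split.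
  apply/forallP => i; rewrite ffunE.
  have Ei : \val i = nat_of_ord i by [].
  case: (eqVneq (\val i) (\val b)) => [e|ne].
    by rewrite e; apply/eqP; rewrite rW hab.
  have := valP F'; rewrite /is_flagY => /andP [/forallP /(_ i) h _]. exact: h.
apply/forallP => i; rewrite !ffunE.
have E1 : \val (inord i : 'I_d.+1) = i by apply: inordK; exact: leqW (ltn_ord i).
have E2 : \val (inord i.+1 : 'I_d.+1) = i.+1 by apply: inordK; exact: ltn_ord i.
rewrite E1 E2.
case: (eqVneq (nat_of_ord i) (val b)) => [e|ne].
  have nb : i.+1 == val b = false by apply/negbTE; lia.
  rewrite nb; move: sWQ; rewrite /Q0 /Fsp -e; exact: id.
case: (eqVneq i.+1 (val b)) => [e|ne2].
  have ea : nat_of_ord i = val a by move: e; rewrite hab; lia.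
  move: sPW; rewrite /P0 /Fsp -ea; exact: id.
exact: (Fsp_mono F' (ltn_ord i)).
Qed.

Definition psi W : flagY K d := insubd F' (psi0 W).
Definition phi (F : flagY K d) : subsp K d := val F (inord b).
Definition agree (F : flagY K d) :=
  [forall i : 'I_d.+1, (val i != nat_of_ord b) ==> (val F i == val F' i)].

Lemma val_psi W : W \in LsM -> val (psi W) = psi0 W.
Proof. by move=> hW; rewrite /psi val_insubd psi0_flagE hW. Qed.

Lemma psi_out W : W \notin LsM -> psi W = F'.
Proof. by move=> hW; apply: val_inj; rewrite /psi val_insubd psi0_flagE (negbTE hW). Qed.

Lemma Fsp_psi W c : W \in LsM -> (c <= d)%N ->
  Fsp (psi W) c = if c == val b then val W else Fsp F' c.
Proof. by move=> hW hc; rewrite /Fsp val_psi // psi0E //; case: (c == val b). Qed.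

Lemma agree_Fsp F c : agree F -> (c <= d)%N -> c != val b -> Fsp F c = Fsp F' c.
Proof.
move=> /forallP /(_ (inord c)) h hc nc; rewrite /Fsp.
have E : \val (inord c : 'I_d.+1) = c by exact: inordK.
by move: h; rewrite E nc => /eqP ->.
Qed.

Lemma phi_in F : agree F -> phi F \in LsM.
Proof.
move=> ag; have hb' : (val b <= d)%N := ltnW hb.
have ha' : (val a <= d)%N := ltnW ha.
rewrite inE.
have -> : val (phi F) = Fsp F b by [].
rewrite Fsp_rank // hab eqxx /=.
rewrite /P0 -(agree_Fsp ag ha') ?nab // /Q0 -(agree_Fsp ag hb) ?hab;
  last by apply/negbT; rewrite -hab; lia.
rewrite -hab (Fsp_mono F hb) andbT.
by have := Fsp_mono F ha; rewrite hab.
Qed.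

Lemma psi_phi F : agree F -> psi (phi F) = F.
Proof.
move=> ag; apply: val_inj; rewrite val_psi ?phi_in //.
apply/ffunP => i; rewrite ffunE.
case: (eqVneq (\val i) (\val b)) => [e|ne].
  rewrite /phi; congr (val F _); apply: val_inj; rewrite e.
  by have := @inordK d (val b) (ltnW hb).
by move: ag => /forallP /(_ i); rewrite ne /= => /eqP ->.
Qed.

Lemma sum_reduce (R : nmodType) (g : flagY K d -> R) :
  \sum_(F | agree F && (Fsp F b != Fsp F' b)) g F =
  \sum_(W | (W \in LsM) && (W != W0)) g (psi W).
Proof.
rewrite (reindex_onto psi phi); last by move=> F /andP [ag _]; exact: psi_phi.
apply: eq_bigl => W.
case: (boolP (W \in LsM)) => hW; last by rewrite psi_out // eqxx andbF.
have hb' : (val b <= d)%N := ltnW hb.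
have ag : agree (psi W).
  apply/forallP => i; apply/implyP => ni; rewrite val_psi // ffunE.
  by rewrite (negbTE ni).
rewrite ag Fsp_psi // eqxx -W0E val_eqE /=.
have -> : phi (psi W) = W by rewrite /phi val_psi // psi0E // eqxx.
by rewrite eqxx andbT.
Qed.

Variable (V : flagX K n d).

Definition colok (F : flagY K d) (c : 'I_d) (r : 'I_d -> 'I_n) :=
  [forall i : 'I_n, orbmx V F i c == Bmx r i c].
Definition other (F : flagY K d) (r : 'I_d -> 'I_n) :=
  [forall c : 'I_d, (c != a) && (c != b) ==> colok F c r].

Lemma er_split F r : [forall i, forall j, orbmx V F i j == Bmx r i j] =
  [&& colok F a r, colok F b r & other F r].
Proof.
apply/idP/idP.
  move=> /forallP h.
  have hc : forall c, colok F c r by move=> c; apply/forallP => i; exact: (forallP (h i) c).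
  by rewrite !hc /=; apply/forallP => c; rewrite hc implybT.
move=> /and3P [h1 h2 /forallP h3]; apply/forallP => i; apply/forallP => c.
case: (eqVneq c a) => [->|ca]; first exact: (forallP h1 i).
case: (eqVneq c b) => [->|cb]; first exact: (forallP h2 i).
by have := h3 c; rewrite ca cb /= => /forallP /(_ i).
Qed.

Lemma colok_cond F (c : 'I_d) r : colok F c r =
  [forall k : 'I_n.+1, (Vsp V k :&: Fsp F c.+1 <= Fsp F c)%MS == (k <= r c)%N].
Proof.
rewrite -colcondE; first by apply: eq_forallb => i.
  exact: Fsp_mono.
by rewrite !Fsp_rank // ltnW.
Qed.

Definition aa W (k : 'I_n.+1) := aW P0 W (Vsp V k).
Definition bb W (k : 'I_n.+1) := bW Q0 W (Vsp V k).

Lemma colok_a_psi W r : W \in LsM ->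
  colok (psi W) a r = [forall k, aa W k == (k <= r a)%N].
Proof.
move=> hW; rewrite colok_cond; apply: eq_forallb => k.
rewrite !Fsp_psi ?nab -?hab ?eqxx //; by [exact: ha|exact: hb|exact: ltnW ha|exact: ltnW hb].
Qed.

Lemma colok_b_psi W r : W \in LsM ->
  colok (psi W) b r = [forall k, bb W k == (k <= r b)%N].
Proof.
move=> hW; rewrite colok_cond; apply: eq_forallb => k.
have nb : (val b).+1 == val b = false by apply/negbTE; lia.
rewrite !Fsp_psi ?nb ?eqxx //; by [exact: ha|exact: hb|exact: ltnW ha|exact: ltnW hb].
Qed.

Lemma colok_a_F' r : colok F' a r = [forall k, aa W0 k == (k <= r a)%N].
Proof. by rewrite colok_cond; apply: eq_forallb => k; rewrite -hab. Qed.

Lemma colok_b_F' r : colok F' b r = [forall k, bb W0 k == (k <= r b)%N].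
Proof. by rewrite colok_cond. Qed.

Lemma other_psi W r : W \in LsM -> other (psi W) r = other F' r.
Proof.
move=> hW; apply: eq_forallb => c.
case: (boolP ((c != a) && (c != b))) => [/andP [ca cb]|] //=.
have nc : (nat_of_ord c == val b) = false by apply/negbTE; exact: cb.
have nc1 : ((nat_of_ord c).+1 == val b) = false by rewrite hab eqSS; apply/negbTE; exact: ca.
rewrite !colok_cond !Fsp_psi ?nc ?nc1 //; by [exact: ltn_ord c | exact: ltnW (ltn_ord c)].
Qed.

Lemma other_swap F (r : 'I_d -> 'I_n) : other F (swapr a b r) = other F r.
Proof.
apply: eq_forallb => c; apply/implyP/implyP => h /andP [ca cb];
  have := h (introT andP (conj ca cb)); rewrite !colok_cond;
  by rewrite /swapr (negbTE ca) (negbTE cb).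
Qed.

Lemma swapr_a (r : 'I_d -> 'I_n) : swapr a b r a = r b. Proof. by rewrite /swapr eqxx. Qed.
Lemma swapr_b (r : 'I_d -> 'I_n) : swapr a b r b = r a.
Proof. by rewrite /swapr eq_sym -val_eqE nab eqxx. Qed.

Lemma htypM : forall k : 'I_n.+1,
  (forall W, W \in LsM -> aa W k && bb W k) \/
  (forall W, W \in LsM -> ~~ aa W k && ~~ bb W k) \/
  (exists2 L, L \in LsM & forall W, W \in LsM -> aa W k = (W != L) /\ bb W k = (W == L)).
Proof. move=> k; exact: (types sPQ0 rP0 rQ0 (Vsp V k)). Qed.

Lemma huniqM : forall (k k' : 'I_n.+1) W W', W \in LsM -> W' \in LsM ->
  ~~ aa W k -> bb W k -> ~~ aa W' k' -> bb W' k' -> W = W'.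
Proof.
move=> k k' W W' hW hW' h1 h2 h3 h4.
case: (leqP k k') => hk.
  apply: (uniq_line sPQ0 rP0 rQ0 _ hW hW' h1 h2 h3 h4).
  by apply: Vsp_le; rewrite hk -ltnS ltn_ord.
apply: esym; apply: (uniq_line sPQ0 rP0 rQ0 _ hW' hW h3 h4 h1 h2).
by apply: Vsp_le; rewrite (ltnW hk) -ltnS ltn_ord.
Qed.

Lemma card_LsM : #|LsM| = #|K|.+1.
Proof. exact: (card_Ls sPQ0 rP0 rQ0). Qed.

Lemma if3 (R : pzSemiRingType) (A B o : bool) :
  (if [&& A, B & o] then 1 else 0 : R) = ((o && (A && B)) : nat)%:R.
Proof. by case: A; case: B; case: o. Qed.

Lemma brk_psi (R : comUnitRingType) (v t : R) (r : 'I_d -> 'I_n) W : W \in LsM ->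
  brk v t r V (psi W) = v ^- Sfib r * t ^+ Sfib r *
     ((other F' r && Cab aa bb W (r a) (r b)) : nat)%:R.
Proof.
move=> hW; rewrite /brk D_Sfib /e_r er_split colok_a_psi // colok_b_psi // other_psi //.
by rewrite if3.
Qed.

Lemma brk_F' (R : comUnitRingType) (v t : R) (r : 'I_d -> 'I_n) :
  brk v t r V F' = v ^- Sfib r * t ^+ Sfib r *
     ((other F' r && Cab aa bb W0 (r a) (r b)) : nat)%:R.
Proof. by rewrite /brk D_Sfib /e_r er_split colok_a_F' colok_b_F' if3. Qed.

Lemma brk_F'_swap (R : comUnitRingType) (v t : R) (r : 'I_d -> 'I_n) :
  brk v t (swapr a b r) V F' = v ^- Sfib (swapr a b r) * t ^+ Sfib (swapr a b r) *
     ((other F' r && Cab aa bb W0 (r b) (r a)) : nat)%:R.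
Proof.
by rewrite /brk D_Sfib /e_r er_split colok_a_F' colok_b_F' if3 other_swap swapr_a swapr_b.
Qed.

Lemma conv_E (R : comUnitRingType) (v t : R) (r : 'I_d -> 'I_n) :
  conv (brk v t r) (Tj v t b) V F' = v ^- Sfib r * t ^+ Sfib r * (v^-1 * t) *
    ((other F' r : nat) * cnt LsM W0 aa bb (r a) (r b))%:R.
Proof.
rewrite /conv.
have eT : forall F, brk v t r V F * Tj v t b F F' =
    if agree F && (Fsp F b != Fsp F' b) then brk v t r V F * (v^-1 * t) else 0.
  by move=> F; rewrite /Tj /agree; case: ifP => _; rewrite ?mulr0.
under eq_bigr => F _ do rewrite eT.
rewrite -big_mkcond /= -mulr_suml sum_reduce.
rewrite (eq_bigr (fun W => v ^- Sfib r * t ^+ Sfib r *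
     ((other F' r && Cab aa bb W (r a) (r b)) : nat)%:R)); last first.
  by move=> W /andP [hW _]; rewrite brk_psi.
rewrite -mulr_sumr -natr_sum /cnt big_distrr /=.
rewrite -!mulrA; congr (_ * (_ * _)); rewrite mulrA mulrC; congr (_ * _); apply: congr1.
by apply: eq_bigr => W _; rewrite mulnb.
Qed.

Lemma main_sec (R : comUnitRingType) (v t : R) (hv : v \is a GRing.unit)
  (hvq : v ^+ 2 = #|K|%:R) (r : 'I_d -> 'I_n) :
  conv (brk v t r) (Tj v t b) V F' =
  (if (r a < r b)%N then brk v t (swapr a b r) V F'
   else if r a == r b then v * t * brk v t r V F'
   else (v * t - v^-1 * t) * brk v t r V F'
        + t ^+ 2 * brk v t (swapr a b r) V F').
Proof.
rewrite conv_E !brk_F'_swap (brk_F' v t r).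
have hq : (1 < #|K|)%N := card_finNzRing_gt1 K.
have hra : (r a < n.+1)%N := leqW (ltn_ord (r a)).
have hrb : (r b < n.+1)%N := leqW (ltn_ord (r b)).
have [c1 c2 c3] := cnt_vals card_LsM W0_in htypM huniqM hra hrb.
have sw := Sfib_swap hab r.
move: c1 c2 c3 sw.
set o := other F' r; set x := Cab aa bb W0 (r a) (r b); set y := Cab aa bb W0 (r b) (r a).
set S := Sfib r; set S' := Sfib (swapr a b r).
set cn := cnt LsM W0 aa bb (r a) (r b) => c1 c2 c3 sw.
clearbody o x y.
rewrite -!exprVn; set w := v^-1.
have hw : w * v = 1 := mulVr hv.
have -> : (r a == r b) = (nat_of_ord (r a) == nat_of_ord (r b)) by [].
have hq1 : (1 <= #|K|)%N := ltnW hq.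
case: ltngtP => h.
- have h1 : (r b <= r a)%N = false by rewrite leqNgt h.
  have h2 : (r a <= r b)%N by exact: ltnW h.
  have eS : S' = S.+1 by move: sw; rewrite h1 h2 /=; lia.
  rewrite (c1 h) eS; exact: alg_lt.
- have h1 : (r a <= r b)%N = false by rewrite leqNgt h.
  have h2 : (r b <= r a)%N by exact: ltnW h.
  have eS : S = S'.+1 by move: sw; rewrite h1 h2 /=; lia.
  rewrite (c3 h) eS; exact: alg_gt.
- rewrite (c2 h); exact: alg_eq.
Qed.

End Main.

Unset Implicit Arguments.

Theorem mainTheorem5 (K : finFieldType) (n d : nat) (R : comUnitRingType)
  (v t : R) (hq : odd #|K|) (hn : (0 < n)%N) (hd : (0 < d)%N)
  (hv : v \is a GRing.unit) (ht : t \is a GRing.unit)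
  (hvq : v ^+ 2 = #|K|%:R)
  (a b : 'I_d) (hab : val b = (val a).+1) (r : 'I_d -> 'I_n)
  (V : flagX K n d) (F' : flagY K d) :
  conv (brk v t r) (Tj v t b) V F' =
  (if (r a < r b)%N then brk v t (swapr a b r) V F'
   else if r a == r b then v * t * brk v t r V F'
   else (v * t - v^-1 * t) * brk v t r V F'
        + t ^+ 2 * brk v t (swapr a b r) V F').
Proof. exact: (@main_sec K n d a b hab F' V R v t hv hvq r). Qed.
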